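(* Let $A,B\in\mathrm{Sym}^{\rm qnd}(\mathbb C^{2d})$ be such that $\mathbb 1+A\theta B\theta$ is invertible (so $A\#B$ is well defined). Then \begin{align*} A\#B&=c\big(c(A\theta)c(B\theta)\big)\theta\\ &=(\mathbb 1+A\theta)^{-1}(A\theta+B\theta)(\mathbb 1+A\theta B\theta)^{-1}(\mathbb 1+A\theta)\theta\\ &=(\mathbb 1+B\theta)(\mathbb 1+A\theta B\theta)^{-1}(A\theta+B\theta)(\mathbb 1+B\theta)^{-1}\theta\\ &=(\mathbb 1-A\theta)(\mathbb 1+B\theta A\theta)^{-1}(A\theta+B\theta)(\mathbb 1-A\theta)^{-1}\theta\\ &=(\mathbb 1-B\theta)^{-1}(A\theta+B\theta)(\mathbb 1+B\theta A\theta)^{-1}(\mathbb 1-B\theta)\theta, \end{align*} (all inverses and Cayley transforms appearing here exist), $c\big((A\#B)\theta\big)=c(A\theta)c(B\theta)$, \[ \mathbb 1+A\theta B\theta=(\mathbb 1+A\theta)\big(\mathbb 1+(A\#B)\theta\big)^{-1}(\mathbb 1+B\theta), \] and $A\#B\in\mathrm{Sym}^{\rm qnd}(\mathbb C^{2d})$.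
   Context: Let $d\ge 1$, let $\mathbb 1$ denote an identity matrix, and let $\theta=\begin{bmatrix}0&-i\mathbb 1_d\\ i\mathbb 1_d&0\end{bmatrix}$ ($2d\times 2d$). $\mathrm{Sym}(\mathbb C^{n})$ denotes the set of complex symmetric $n\times n$ matrices, and $\mathrm{Sym}^{\rm qnd}(\mathbb C^{2d})=\{A\in\mathrm{Sym}(\mathbb C^{2d}):\det(\mathbb 1+A\theta)\neq0\}$. For a square matrix $R$ with $\mathbb 1+R$ invertible, its Cayley transform is $c(R)=(\mathbb 1-R)(\mathbb 1+R)^{-1}$. For $A,B\in\mathrm{Sym}(\mathbb C^{2d})$ such that $M=\begin{bmatrix}\theta A\theta&-\theta\\ \theta&\theta B\theta\end{bmatrix}$ is invertible, $A\#B:=J^TM^{-1}J$ with $J=\begin{bmatrix}-\mathbb 1_{2d}\\ \mathbb 1_{2d}\end{bmatrix}$; $A\#B$ is well defined iff $M$ is invertible, which holds iff $\mathbb 1+A\theta B\theta$ is invertible. *)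

(* Defs.v *)
(* Complex numbers: an arbitrary numClosedFieldType C
   (e.g. algC); the statement is purely algebraic. *)
From HB Require Import structures.
From mathcomp Require Import all_boot all_order all_algebra.
Set Implicit Arguments. Unset Strict Implicit. Unset Printing Implicit Defensive.
Import Order.TTheory GRing.Theory Num.Theory.
Local Open Scope ring_scope.

Section Defs.
Variables (C : numClosedFieldType) (d : nat).
Local Notation M2 := 'M[C]_(d + d).

Definition theta : M2 :=
  block_mx 0 (- 'i *: 1%:M) ('i *: 1%:M) 0.

Definition is_sym (A : M2) : Prop := A^T = A.

Definition is_symqnd (A : M2) : Prop :=
  is_sym A /\ \det (1%:M + A *m theta) != 0.

Definition cayley n (R : 'M[C]_n) : 'M[C]_n :=
  (1%:M - R) *m invmx (1%:M + R).

Definition sharpM (A B : M2) : 'M[C]_((d + d) + (d + d)) :=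
  block_mx (theta *m A *m theta) (- theta) theta (theta *m B *m theta).

Definition Jmx : 'M[C]_((d + d) + (d + d), d + d) := col_mx (- 1%:M) 1%:M.

Definition sharp (A B : M2) : M2 := (Jmx^T *m invmx (sharpM A B)) *m Jmx.
End Defs.

(* Main.v *)
Require Import Defs.
From HB Require Import structures.
From mathcomp Require Import all_boot all_order all_algebra.
Import Order.TTheory GRing.Theory Num.Theory.
Local Open Scope ring_scope.
Set Implicit Arguments. Unset Strict Implicit.

Section Core.

Variables (C : numClosedFieldType) (n : nat).
Local Notation M := 'M[C]_n.


Lemma inv_uniq (P Q : M) : P *m Q = 1%:M -> invmx P = Q.
Proof.
move=> PQ; have [uP _] := mulmx1_unit PQ.
by rewrite -[invmx P]mulmx1 -PQ mulmxA mulVmx // mul1mx.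
Qed.

Lemma invmxM (P Q : M) : P \in unitmx -> Q \in unitmx ->
  invmx (P *m Q) = invmx Q *m invmx P.
Proof.
move=> uP uQ; apply: inv_uniq.
by rewrite -mulmxA (mulmxA Q) mulmxV // mul1mx mulmxV.
Qed.

Lemma cayleyE (Z : M) : 1%:M + Z \in unitmx ->
  cayley Z = 2%:R *: invmx (1%:M + Z) - 1%:M.
Proof.
move=> uZ; rewrite /cayley.
have -> : 1%:M - Z = 2%:R *: 1%:M - (1%:M + Z).
  by rewrite scaler_nat mulr2n opprD addrA addrK.
by rewrite mulmxBl -scalemxAl mul1mx mulmxV.
Qed.

Lemma cancel_l (P Q R : M) : P \in unitmx -> P *m Q = P *m R -> Q = R.
Proof. by move=> uP E; rewrite -(mulKmx uP Q) E mulKmx. Qed.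

Lemma cancel_r (P Q R : M) : P \in unitmx -> Q *m P = R *m P -> Q = R.
Proof. by move=> uP E; rewrite -(mulmxK uP Q) E mulmxK. Qed.

End Core.

Ltac bubble u := try rewrite [u + _]addrC; do 30 (try rewrite (addrAC _ u)).
Ltac zstep := match goal with
 | |- ?s + ?t = 0 => apply/eqP; rewrite addr_eq0 ?opprK; apply/eqP;
     first [ reflexivity | match goal with |- _ = ?u => bubble u; apply/eqP; rewrite -subr_eq0 addrK; apply/eqP end ]
 end.
Ltac zsolve := apply/eqP; rewrite -subr_eq0; apply/eqP;
  rewrite ?opprD ?opprK ?oppr0 ?addr0 ?add0r ?addrA;
  repeat zstep; rewrite ?subrr ?addr0 ?add0r.

Section XY.
Variables (C : numClosedFieldType) (n : nat).
Local Notation M := 'M[C]_n.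
Variables (X Y : M).
Hypotheses (hXY : 1%:M + X *m Y \in unitmx) (hYX : 1%:M + Y *m X \in unitmx).
Let U := invmx (1%:M + X *m Y).
Let V := invmx (1%:M + Y *m X).

Lemma F1 : U + X *m (Y *m U) = 1%:M.
Proof. by have := mulmxV hXY; rewrite mulmxDl mul1mx -mulmxA. Qed.
Lemma F2 : U + U *m X *m Y = 1%:M.
Proof. by have := mulVmx hXY; rewrite mulmxDr mulmx1 mulmxA. Qed.
Lemma F3 : V + Y *m (X *m V) = 1%:M.
Proof. by have := mulmxV hYX; rewrite mulmxDl mul1mx -mulmxA. Qed.
Lemma F4 : V + V *m Y *m X = 1%:M.
Proof. by have := mulVmx hYX; rewrite mulmxDr mulmx1 mulmxA. Qed.

Lemma pushUX : U *m X = X *m V.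
Proof.
have E : X *m (1%:M + Y *m X) = (1%:M + X *m Y) *m X.
  by rewrite mulmxDr mulmxDl mulmx1 mul1mx !mulmxA.
rewrite -[U *m X]mulmx1 -(mulmxV hYX) mulmxA -(mulmxA U) E mulmxA.
by rewrite mulVmx // mul1mx.
Qed.

Lemma pushYU : Y *m U = V *m Y.
Proof.
have E : (1%:M + Y *m X) *m Y = Y *m (1%:M + X *m Y).
  by rewrite mulmxDr mulmxDl mulmx1 mul1mx !mulmxA.
rewrite -[Y *m U]mul1mx -(mulVmx hYX) -!mulmxA (mulmxA _ Y) E -mulmxA.
by rewrite mulmxV // mulmx1.
Qed.

Let P := (1%:M + Y) *m U *m (1%:M + X).

Lemma P_alt : P - 1%:M = 1%:M - (1%:M - X) *m V *m (1%:M - Y).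
Proof.
rewrite /P !mulmxDl !mulmxDr ?mulmxBl ?mulmxBr !mul1mx !mulmx1 -!mulmxA.
rewrite !mulmxN !mulNmx !opprK pushUX -[V *m Y]pushYU.
have hU : U = 1%:M - X *m (Y *m U) by rewrite -F1 addrK.
have hV : V = 1%:M - Y *m (X *m V) by rewrite -F3 addrK.
set a := X *m (Y *m U); set b := Y *m (X *m V); set c := Y *m U; set e := X *m V.
rewrite hU hV; zsolve.
Qed.

Hypotheses (hX : 1%:M + X \in unitmx) (hY : 1%:M + Y \in unitmx)
  (hXm : 1%:M - X \in unitmx) (hYm : 1%:M - Y \in unitmx).

Lemma E1 : (1%:M + X) *m (1%:M + Y) - (1%:M + X *m Y) = X + Y.
Proof. rewrite !mulmxDl !mulmxDr !mul1mx !mulmx1; zsolve. Qed.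

Lemma E2 : (1%:M + Y *m X) - (1%:M - Y) *m (1%:M - X) = X + Y.
Proof. rewrite !mulmxBl !mulmxBr !mul1mx !mulmx1 ?mulNmx ?mulmxN; zsolve. Qed.

Lemma form2 : invmx (1%:M + X) *m (X + Y) *m U *m (1%:M + X) = P - 1%:M.
Proof.
apply: (cancel_l hX); rewrite -!mulmxA mulKVmx //.
rewrite mulmxBr mulmx1 /P !mulmxA -E1 !mulmxBl (mulmxV hXY) mul1mx.
by rewrite ?mulmxA.
Qed.

Lemma form3 : (1%:M + Y) *m U *m (X + Y) *m invmx (1%:M + Y) = P - 1%:M.
Proof.
apply: (@cancel_r _ _ _ _ _ hY); rewrite mulmxKV //.
have e : 1%:M + Y = (1%:M + Y) *m U *m (1%:M + X *m Y).
  by rewrite -mulmxA mulVmx // mulmx1.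
rewrite mulmxBl mul1mx {3}e /P -!mulmxA -!mulmxBr E1.
by rewrite ?mulmxA.
Qed.

Lemma form4 : (1%:M - X) *m V *m (X + Y) *m invmx (1%:M - X) = P - 1%:M.
Proof.
apply: (@cancel_r _ _ _ _ _ hXm); rewrite mulmxKV // P_alt.
have e : 1%:M - X = (1%:M - X) *m V *m (1%:M + Y *m X).
  by rewrite -mulmxA mulVmx // mulmx1.
rewrite [RHS]mulmxBl mul1mx {2}e -!mulmxA -!mulmxBr E2.
by rewrite ?mulmxA.
Qed.

Lemma form5 : invmx (1%:M - Y) *m (X + Y) *m V *m (1%:M - Y) = P - 1%:M.
Proof.
apply: (@cancel_l _ _ _ _ _ hYm); rewrite -!mulmxA mulKVmx // P_alt.
have e : 1%:M - Y = (1%:M + Y *m X) *m (V *m (1%:M - Y)).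
  by rewrite mulKVmx.
rewrite [RHS]mulmxBr mulmx1 {2}e !mulmxA -!mulmxBl E2.
by rewrite ?mulmxA.
Qed.

Lemma two_unit : (2%:R : C) \is a GRing.unit.
Proof. by rewrite unitfE pnatr_eq0. Qed.

Lemma cXl : (1%:M + X) *m cayley X = 1%:M - X.
Proof.
rewrite cayleyE // mulmxBr mulmx1 -scalemxAr mulmxV // scaler_nat mulr2n.
zsolve.
Qed.

Lemma cYr : cayley Y *m (1%:M + Y) = 1%:M - Y.
Proof.
rewrite cayleyE // mulmxBl mul1mx -scalemxAl mulVmx // scaler_nat mulr2n.
zsolve.
Qed.

Lemma Qe : (1%:M + X) *m (1%:M + cayley X *m cayley Y) *m (1%:M + Y)
  = 2%:R *: (1%:M + X *m Y).
Proof.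
rewrite (mulmxDr (1%:M + X)) mulmx1 (mulmxDl _ _ (1%:M + Y)) (mulmxA (1%:M + X) (cayley X)) cXl.
rewrite -(mulmxA (1%:M - X)) cYr scaler_nat mulr2n.
rewrite !mulmxDl !mulmxDr ?mulmxBl ?mulmxBr !mul1mx !mulmx1 ?mulNmx ?mulmxN ?opprK.
zsolve.
Qed.

Lemma Qunit : 1%:M + cayley X *m cayley Y \in unitmx.
Proof.
have : (1%:M + X) *m (1%:M + cayley X *m cayley Y) *m (1%:M + Y) \in unitmx.
  by rewrite Qe unitmxZ // two_unit.
by rewrite !unitmx_mul => /andP[/andP[]].
Qed.

Lemma Qe' : 1%:M + cayley X *m cayley Y =
  2%:R *: (invmx (1%:M + X) *m (1%:M + X *m Y) *m invmx (1%:M + Y)).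
Proof.
apply: (@cancel_l _ _ _ _ _ hX); apply: (@cancel_r _ _ _ _ _ hY).
by rewrite Qe -scalemxAr -scalemxAl !mulmxA mulmxV // mul1mx mulmxKV.
Qed.

Lemma Punit : P \in unitmx.
Proof. by rewrite !unitmx_mul hX hY unitmx_inv hXY. Qed.

Lemma invP : invmx P = invmx (1%:M + X) *m (1%:M + X *m Y) *m invmx (1%:M + Y).
Proof.
rewrite /P invmxM ?unitmx_mul ?hY ?unitmx_inv // invmxM ?unitmx_inv //.
by rewrite invmxK mulmxA.
Qed.

Lemma cay_cay : cayley (cayley X *m cayley Y) = P - 1%:M.
Proof.
have uQ := Qunit.
rewrite cayleyE // Qe' invmxZ -?Qe' // -invP invmxK scalerA mulfV ?scale1r //.
by rewrite pnatr_eq0.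
Qed.

Lemma P1 : 1%:M + (P - 1%:M) = P.
Proof. by rewrite addrC subrK. Qed.

Lemma cay_P : cayley (P - 1%:M) = cayley X *m cayley Y.
Proof.
rewrite cayleyE ?P1 ?Punit // invP -Qe'.
by rewrite addrAC subrr add0r.
Qed.

Lemma form8 : 1%:M + X *m Y = (1%:M + X) *m invmx (1%:M + (P - 1%:M)) *m (1%:M + Y).
Proof.
rewrite P1 invP !mulmxA mulmxV // mul1mx mulmxKV //.
Qed.

End XY.


Section Th.
Variables (C : numClosedFieldType) (d : nat).
Local Notation th := (theta C d).

Lemma thE : th = block_mx 0 (- 'i)%:M ('i)%:M 0.
Proof. by rewrite /theta !scalemx1. Qed.

Lemma thth : th *m th = 1%:M.
Proof.
rewrite thE mulmx_block !mulmx0 !mul0mx !addr0 !add0r -!scalar_mxM.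
by rewrite mulNr mulrN mulCii opprK -scalar_mx_block.
Qed.

Lemma thT : th^T = - th.
Proof.
rewrite thE tr_block_mx !trmx0 !tr_scalar_mx opp_block_mx oppr0.
have sN : forall a : C, (- a)%:M = - (a%:M : 'M_d).
  by move=> a; apply/matrixP => i j; rewrite !mxE mulNrn.
by rewrite !sN opprK.
Qed.

Lemma th_unit : th \in unitmx.
Proof. by case: (mulmx1_unit thth). Qed.

Lemma trD1 (Z : 'M[C]_(d + d)) : (1%:M + Z)^T = 1%:M + Z^T.
Proof. by rewrite raddfD /= trmx1. Qed.

Lemma tr_conj (A : 'M[C]_(d + d)) : A^T = A ->
  1%:M - A *m th = (th *m (1%:M + A *m th) *m th)^T.
Proof.
move=> sA.
rewrite !trmx_mul trD1 trmx_mul sA thT !mulNmx !mulmxN opprK.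
by rewrite mulmxBl mul1mx mulmxBr thth !mulmxA thth mul1mx.
Qed.

Lemma tr_conj2 (A B : 'M[C]_(d + d)) : A^T = A -> B^T = B ->
  1%:M + B *m th *m (A *m th) = (th *m (1%:M + A *m th *m (B *m th)) *m th)^T.
Proof.
move=> sA sB.
rewrite !trmx_mul trD1 !trmx_mul sA sB thT !mulNmx !mulmxN !opprK.
by rewrite mulmxDl mul1mx mulmxDr thth !mulmxA thth mul1mx.
Qed.
End Th.


Lemma K_inv (C : numClosedFieldType) n (X Y : 'M[C]_n) :
  1%:M + X *m Y \in unitmx ->
  block_mx X (- (1%:M : 'M[C]_n)) (1%:M : 'M[C]_n) Y *m
  block_mx (Y *m invmx (1%:M + X *m Y))
    ((1%:M : 'M[C]_n) - Y *m invmx (1%:M + X *m Y) *m X)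
    (- invmx (1%:M + X *m Y)) (invmx (1%:M + X *m Y) *m X) = 1%:M.
Proof.
move=> hXY; rewrite mulmx_block [RHS](scalar_mx_block n n).
have h1 := F1 hXY.
have h2 : (invmx (1%:M + X *m Y) + X *m (Y *m invmx (1%:M + X *m Y))) *m X = X.
  by rewrite h1 mul1mx.
congr block_mx.
- by rewrite mulNmx mul1mx opprK addrC.
- rewrite mulmxDl in h2; rewrite mulmxBr mulmx1 mulNmx mul1mx.
  rewrite -{1}h2 !mulmxA; zsolve.
- by rewrite mul1mx mulmxN subrr.
- by rewrite mul1mx !mulmxA subrK.
Qed.

Section Sh.
Variables (C : numClosedFieldType) (d : nat).
Local Notation th := (theta C d).
Local Notation D := (block_mx th 0 0 th).

Lemma Dsq : D *m D = 1%:M.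
Proof.
by rewrite mulmx_block !mulmx0 !mul0mx !addr0 !add0r thth -scalar_mx_block.
Qed.

Lemma sharpM_eq (A B : 'M[C]_(d + d)) :
  sharpM A B = D *m block_mx (A *m th) (- 1%:M) 1%:M (B *m th).
Proof.
by rewrite /sharpM mulmx_block !mul0mx !addr0 !add0r mulmxN mulmx1 !mulmxA.
Qed.

Variables (A B : 'M[C]_(d + d)).
Let X := A *m th.
Let Y := B *m th.
Let U := invmx (1%:M + X *m Y).
Hypothesis hXY : 1%:M + X *m Y \in unitmx.

Lemma sharpE : sharpM A B *m
  (block_mx (Y *m U) (1%:M - Y *m U *m X) (- U) (U *m X) *m D) = 1%:M.
Proof.
rewrite sharpM_eq -mulmxA (mulmxA (block_mx _ _ _ _)).
by rewrite K_inv // mul1mx Dsq.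
Qed.

Lemma sharp_inv : invmx (sharpM A B) =
  block_mx (Y *m U) (1%:M - Y *m U *m X) (- U) (U *m X) *m D.
Proof. exact: inv_uniq sharpE. Qed.

Lemma sharp_unit : sharpM A B \in unitmx.
Proof. by case: (mulmx1_unit sharpE). Qed.

Lemma sharp_eq : sharp A B = ((1%:M + Y) *m U *m (1%:M + X) - 1%:M) *m th.
Proof.
rewrite /sharp sharp_inv /Jmx tr_col_mx raddfN /= trmx1.
rewrite mulmxA mul_row_block mul_row_block mul_row_col.
rewrite !mulmx0 !addr0 !add0r !mulNmx !mul1mx !mulmxN !mulmx1.
rewrite -mulNmx -mulmxDl; congr (_ *m _).
rewrite !mulmxDl !mulmxDr !mul1mx !mulmx1 !mulmxA; zsolve.
Qed.

Lemma sharpM_sym : A^T = A -> B^T = B -> (sharpM A B)^T = sharpM A B.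
Proof.
move=> sA sB; rewrite /sharpM tr_block_mx !trmx_mul sA sB !raddfN /= !thT.
by rewrite !mulNmx !mulmxN !opprK !mulmxA.
Qed.

Lemma sharp_sym : A^T = A -> B^T = B -> (sharp A B)^T = sharp A B.
Proof.
move=> sA sB; rewrite /sharp !trmx_mul trmxK trmx_inv sharpM_sym //.
by rewrite mulmxA.
Qed.
End Sh.

Unset Implicit Arguments.
Theorem mainTheorem3 (C : numClosedFieldType) (d : nat) (hd : (0 < d)%N)
  (A B : 'M[C]_(d + d)) (hA : is_symqnd A) (hB : is_symqnd B)
  (hAB : 1%:M + A *m theta C d *m B *m theta C d \in unitmx) :
  let th := theta C d in
  let At := A *m th in
  let Bt := B *m th in
  let S := sharp A B in
  [/\ (* well-definedness and existence of all inverses / Cayley transforms *)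
      [/\ sharpM A B \in unitmx,
          [/\ 1%:M + At \in unitmx, 1%:M + Bt \in unitmx &
               1%:M + Bt *m At \in unitmx],
          1%:M - At \in unitmx, 1%:M - Bt \in unitmx &
          1%:M + cayley At *m cayley Bt \in unitmx],
      (* the chain of equalities *)
      [/\ S = cayley (cayley At *m cayley Bt) *m th,
          S = invmx (1%:M + At) *m (At + Bt) *m invmx (1%:M + At *m Bt)
                *m (1%:M + At) *m th,
          S = (1%:M + Bt) *m invmx (1%:M + At *m Bt) *m (At + Bt)
                *m invmx (1%:M + Bt) *m th,
          S = (1%:M - At) *m invmx (1%:M + Bt *m At) *m (At + Bt)
                *m invmx (1%:M - At) *m th &
          S = invmx (1%:M - Bt) *m (At + Bt) *m invmx (1%:M + Bt *m At)
                *m (1%:M - Bt) *m th],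
      cayley (S *m th) = cayley At *m cayley Bt,
      1%:M + At *m Bt = (1%:M + At) *m invmx (1%:M + S *m th) *m (1%:M + Bt) &
      is_symqnd S].
Proof.
move=> th At Bt S.
rewrite /S /At /Bt /th.
case: hA => sA dA; case: hB => sB dB.
have hXY : 1%:M + A *m theta C d *m (B *m theta C d) \in unitmx by rewrite mulmxA.
have hX : 1%:M + A *m theta C d \in unitmx by rewrite unitmxE unitfE.
have hY : 1%:M + B *m theta C d \in unitmx by rewrite unitmxE unitfE.
have hXm : 1%:M - A *m theta C d \in unitmx.
  by rewrite (tr_conj sA) unitmx_tr !unitmx_mul th_unit hX.
have hYm : 1%:M - B *m theta C d \in unitmx.
  by rewrite (tr_conj sB) unitmx_tr !unitmx_mul th_unit hY.
have hYX : 1%:M + B *m theta C d *m (A *m theta C d) \in unitmx.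
  by rewrite (tr_conj2 sA sB) unitmx_tr !unitmx_mul th_unit hXY.
have SE := sharp_eq hXY.
have Sth : sharp A B *m theta C d =
  (1%:M + B *m theta C d) *m invmx (1%:M + A *m theta C d *m (B *m theta C d))
    *m (1%:M + A *m theta C d) - 1%:M.
  by rewrite SE -mulmxA thth mulmx1.
split.
- split => //; first exact: sharp_unit.
  exact: Qunit.
- split; rewrite SE.
  + by rewrite (cay_cay hXY hX hY).
  + by rewrite (form2 hXY hX).
  + by rewrite (form3 hXY hY).
  + by rewrite (form4 hXY hYX hXm).
  + by rewrite (form5 hXY hYX hYm).
- by rewrite Sth (cay_P hXY hX hY).
- by rewrite Sth; exact: form8.
- split; first exact: sharp_sym.
  by rewrite Sth P1 -unitfE -unitmxE (Punit hXY hX hY).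
Qed.
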